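(* Let $\mathbf{A}\in\mathbb{R}^{d\times n}_{\ge0}$, $\epsilon\in[0,\frac12]$, $p\ge2$. Consider the iterates $w_t$ of the algorithm PNormPacking described in the context, and define $\Phi_t = \|\mathbf{A}w_t\|_p - \|w_t\|_1$. Then in every iteration $t$ of the algorithm, $\Phi_{t+1}\le\Phi_t$.
   Context: Powers of vectors are entrywise, $\circ$ is the entrywise product. Algorithm PNormPacking$(\mathbf{A},\epsilon,p)$: set $\eta = 1/p$, $T = \frac{4p\log(nd/\epsilon)}{\epsilon}$, $w_0 = \frac{\epsilon}{n^2 d}\mathbf{1}$, $z=\mathbf{0}$, $t=0$. While $\|w_t\|_1\le\epsilon^{-1}$: let $v_t = \mathbf{A}w_t/\|\mathbf{A}w_t\|_p$, $g_t = \max(0,\mathbf{1}-\mathbf{A}^\top(v_t)^{p-1})$ entrywise, $w_{t+1} = w_t\circ(1+\eta g_t)$, $z\leftarrow z+(v_t)^{p-1}$, $t\leftarrow t+1$; if $t\ge T$, return $z/\|z\|_q$ with $q = p/(p-1)$. If the loop exits, return $w_t/\|w_t\|_1$. *)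

(* Defs.v *)
From mathcomp Require Import all_boot all_order all_algebra.
From mathcomp Require Import all_classical all_reals all_analysis.
Set Implicit Arguments. Unset Strict Implicit. Unset Printing Implicit Defensive.
Import Order.TTheory GRing.Theory Num.Theory.
Local Open Scope ring_scope.

Section PNormPacking.
Variables (R : realType) (d n : nat) (A : 'M[R]_(d, n)) (eps p : R).

Definition pnorm m (x : 'cV[R]_m) : R := (\sum_i `|x i 0| `^ p) `^ (p^-1).
Definition l1norm m (x : 'cV[R]_m) : R := \sum_i `|x i 0|.
Definition epow m (x : 'cV[R]_m) (r : R) : 'cV[R]_m := \col_i (x i 0 `^ r).

Definition eta : R := p^-1.
Definition Tbound : R := 4 * p * ln ((n * d)%:R / eps) / eps.
Definition w0 : 'cV[R]_n := const_mx (eps / ((n ^ 2 * d)%:R)).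

Definition vstep (w : 'cV[R]_n) : 'cV[R]_d := (pnorm (A *m w))^-1 *: (A *m w).
Definition gstep (w : 'cV[R]_n) : 'cV[R]_n :=
  \col_j Num.max 0 (1 - (A^T *m epow (vstep w) (p - 1)) j 0).
Definition wstep (w : 'cV[R]_n) : 'cV[R]_n :=
  \col_j (w j 0 * (1 + eta * gstep w j 0)).

Fixpoint witer (t : nat) : 'cV[R]_n :=
  if t is t'.+1 then wstep (witer t') else w0.

Definition Phi (t : nat) : R := pnorm (A *m witer t) - l1norm (witer t).

(* iteration t (0-indexed, the one computing w_{t+1} from w_t) is executed by
   the algorithm: the while-condition held at w_0,...,w_t and no earlier
   iteration returned because of the counter reaching T. *)
Definition iteration_executed (t : nat) : Prop :=
  (forall s, (s <= t)%N -> l1norm (witer s) <= eps^-1) /\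
  (forall s, (s < t)%N -> (s.+1)%:R < Tbound).
End PNormPacking.

(* Main.v *)
Require Import Defs.
From mathcomp Require Import all_boot all_order all_algebra.
From mathcomp Require Import all_classical all_reals all_analysis.
From mathcomp Require Import ring lra.
Import Order.TTheory GRing.Theory Num.Theory.
Local Open Scope ring_scope.

Lemma poly8 (R : realFieldType) (a : R) : 0 <= a -> a <= 1/8 ->
  1 <= (1 - a) ^+ 8 * (1 + 8 * a + 64 * a ^+ 2).
Proof. move=> h0 h1; nra. Qed.

Lemma exp_bound (R : realType) (m : R) : 0 <= m -> m <= 1 ->
  expR m <= 1 + m + m ^+ 2.
Proof.
move=> m0 m1.
set a := m / 8.
have a0 : 0 <= a by rewrite /a divr_ge0.
have a1 : a <= 1/8 by rewrite /a ler_pM2r //.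
have mE : m = 8%:R * a by rewrite /a; field.
have e1 : 1 - a <= (expR a)^-1 by rewrite -expRN; have := expR_ge1Dx (- a).
set E := expR a.
have E0 : 0 < E by exact: expR_gt0.
have h1 : E * (1 - a) <= 1.
  have Ene : E != 0 by rewrite gt_eqF.
  rewrite -[X in _ <= X](mulfV Ene); apply: ler_wpM2l; [exact: ltW|exact: e1].
have h2 : (E * (1 - a)) ^+ 8 <= 1.
  apply: exprn_ile1 => //; apply: mulr_ge0; [exact: ltW|lra].
have hp := @poly8 _ a a0 a1.
rewrite mE expRM_natl -/E.
have -> : 1 + 8%:R * a + (8%:R * a) ^+ 2 = 1 + 8 * a + 64 * a ^+ 2 by ring.
set Q := 1 + 8 * a + 64 * a ^+ 2.
have Q0 : 0 <= Q by rewrite /Q; nra.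
apply: (le_trans (y := E ^+ 8 * ((1 - a) ^+ 8 * Q))).
  by rewrite -{1}(mulr1 (E ^+ 8)) ler_wpM2l // exprn_ge0 // ltW.
by rewrite mulrA -exprMn -{2}(mul1r Q) ler_wpM2r.
Qed.

Lemma powR_bound (R : realType) (p m : R) : 2 <= p -> 0 <= m -> m <= 1 ->
  (1 + m / p) `^ p <= 1 + m + m ^+ 2.
Proof.
move=> hp m0 m1.
have p0 : 0 < p by lra.
have q0 : 0 <= m / p by rewrite divr_ge0 // ltW.
rewrite /powR gt_eqF; last by lra.
apply: (le_trans _ (@exp_bound _ m m0 m1)).
rewrite ler_expR.
have h : ln (1 + m / p) <= m / p by apply: le_ln1Dx; lra.
apply: (le_trans (ler_wpM2l (ltW p0) h)).
have -> : p * (m / p) = m by field; lra.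
by [].
Qed.

Lemma K1s (R : realType) (p X S1 S2 : R) : 2 <= p -> 0 <= S1 -> S1 <= X ->
  0 <= S2 -> S1 ^+ 2 <= X * S2 ->
  (X + p^-1 * S1) `^ p <= X `^ p + X `^ (p - 1) * (S1 + S2).
Proof.
move=> hp h1 h2 h3 h4.
have p0 : 0 < p by lra.
have [X0|Xpos] := eqVneq X 0.
  have -> : S1 = 0 by lra.
  rewrite X0 mulr0 addr0 powR0; last by lra.
  by rewrite add0r mulr_ge0 // ?powR_ge0 // addr_ge0.
have X0 : 0 < X by rewrite lt_def Xpos /=; lra.
set m := S1 / X.
have m0 : 0 <= m by rewrite divr_ge0 // ltW.
have m1 : m <= 1 by rewrite ler_pdivrMr // mul1r.
have -> : X + p^-1 * S1 = X * (1 + m / p) by rewrite /m; field; apply/andP; split; rewrite gt_eqF.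
rewrite powRM ?(ltW X0) //; last by rewrite addr_ge0 // divr_ge0 // ltW.
have hb := @powR_bound _ p m hp m0 m1.
have Xp0 : 0 < X `^ p by rewrite powR_gt0.
have XpE : X `^ (p - 1) = X `^ p / X.
  by rewrite -(mulr_powRB1 (ltW X0) p0) mulrC mulKf // gt_eqF.
rewrite XpE.
apply: (le_trans (ler_wpM2l (ltW Xp0) hb)).
have hm2 : m ^+ 2 <= S2 / X.
  rewrite /m expr_div_n ler_pdivrMr ?exprn_gt0 //.
  by rewrite (_ : S2 / X * X ^+ 2 = X * S2); [|field; rewrite gt_eqF].
have -> : X `^ p + X `^ p / X * (S1 + S2) = X `^ p * (1 + m + S2 / X)
  by rewrite /m; field; rewrite gt_eqF.
rewrite ler_wpM2l ?(ltW Xp0) //; lra.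
Qed.

Lemma CS (R : realType) (I : finType) (c h : I -> R) : (forall j, 0 <= c j) ->
  (\sum_j c j * h j) ^+ 2 <= (\sum_j c j) * \sum_j c j * h j ^+ 2.
Proof.
move=> c0.
set X := \sum_j c j; set S1 := \sum_j c j * h j; set S2 := \sum_j c j * h j ^+ 2.
have X0 : 0 <= X by apply: sumr_ge0 => j _.
have [Xz|Xnz] := eqVneq X 0.
  have cz : forall j, c j = 0.
    by move=> j; apply: (psumr_eq0P (P := xpredT)) => // k _.
  have -> : S1 = 0 by rewrite /S1 big1 // => j _; rewrite cz mul0r.
  by rewrite Xz expr0n /= mul0r.
have Xp : 0 < X by rewrite lt_def Xnz.
set m := S1 / X.
have hs : 0 <= \sum_j c j * (h j - m) ^+ 2.
  by apply: sumr_ge0 => j _; rewrite mulr_ge0 // sqr_ge0.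
have E : \sum_j c j * (h j - m) ^+ 2 = S2 - 2 * m * S1 + m ^+ 2 * X.
  rewrite /S2 /S1 /X mulr_sumr mulr_sumr -sumrB -big_split /=.
  by apply: eq_bigr => j _; ring.
rewrite E in hs.
have mX : m * X = S1 by rewrite /m mulfVK.
have : 0 <= X * S2 - S1 ^+ 2.
  have -> : X * S2 - S1 ^+ 2 = X * (S2 - 2 * m * S1 + m ^+ 2 * X).
    by rewrite -mX; ring.
  by rewrite mulr_ge0.
lra.
Qed.

Lemma K4 (R : realType) (N D p : R) : 0 < N -> 0 <= D -> 2 <= p ->
  (N `^ p + N `^ (p - 1) * D) `^ p^-1 <= N + p^-1 * D.
Proof.
move=> N0 D0 hp.
have p0 : 0 < p by lra.
have Nn : N != 0 by rewrite gt_eqF.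
have pn : p != 0 by rewrite gt_eqF.
have XpE : N `^ (p - 1) = N `^ p / N.
  by rewrite -(mulr_powRB1 (ltW N0) p0) mulrC mulKf.
set u := D / N.
have u0 : 0 <= u by rewrite divr_ge0 // ltW.
have -> : N `^ p + N `^ (p - 1) * D = N `^ p * (1 + u) by rewrite XpE /u; field.
rewrite powRM ?powR_ge0 //; last by lra.
rewrite -powRrM mulfV // powRr1; last exact: ltW.
set a := (1 + u) `^ p^-1.
have a0 : 0 <= a by exact: powR_ge0.
have hq : p^-1 + (1 - p^-1)^-1^-1 = 1 by rewrite invrK; ring.
have q0 : 0 < (1 - p^-1)^-1.
  rewrite invr_gt0 subr_gt0 invf_lt1 //; lra.
have := @conjugate_powR _ a 1 p (1 - p^-1)^-1 a0 ler01 p0 q0 hq.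
rewrite mulr1 powR1 /a -powRrM mulVf // powRr1; last by lra.
rewrite invrK => ha.
have : N * a <= N * ((1 + u) / p + 1 * (1 - p^-1)).
  apply: ler_wpM2l; [exact: ltW|]. exact: ha.
have -> : N * ((1 + u) / p + 1 * (1 - p^-1)) = N + p^-1 * D by rewrite /u; field; rewrite ?Nn ?pn.
by move=> h; exact: h.
Qed.

Lemma core (R : realType) (d n : nat) (A : 'M[R]_(d, n)) (p : R) (w : 'cV[R]_n) :
  (forall i j, 0 <= A i j) -> 2 <= p -> (forall j, 0 <= w j 0) ->
  pnorm p (A *m wstep A p w) - l1norm (wstep A p w) <= pnorm p (A *m w) - l1norm w.
Proof.
move=> hA hp hw.
have p0 : 0 < p by lra.
pose a j := (A^T *m epow (vstep A p w) (p - 1)) j 0.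
have a0 : forall j, 0 <= a j.
  by move=> j; rewrite /a mxE; apply: sumr_ge0 => i _; rewrite mxE mulr_ge0 // mxE powR_ge0.
pose g j := gstep A p w j 0.
have gE : forall j, g j = Num.max 0 (1 - a j) by move=> j; rewrite /g mxE.
have g01 : forall j, 0 <= g j /\ g j <= 1.
  move=> j; rewrite gE; split; first by rewrite le_max lexx.
  by rewrite ge_max ler01 /=; have := a0 j; lra.
have ga : forall j, (g j + g j ^+ 2) * a j <= g j.
  move=> j; rewrite gE; have := a0 j.
  case: (lerP 0 (1 - a j)) => h.
    move=> ha; rewrite -subr_ge0.
    have -> : 1 - a j - (1 - a j + (1 - a j) ^+ 2) * a j = (1 - a j) ^+ 3 by ring.
    exact: exprn_ge0.

  by move=> _; rewrite expr0n /= !add0r mul0r.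
pose x i := (A *m w) i 0.
have xE : forall i, x i = \sum_j A i j * w j 0 by move=> i; rewrite /x mxE.
have x0 : forall i, 0 <= x i by move=> i; rewrite xE; apply: sumr_ge0 => j _; rewrite mulr_ge0.
pose S1 i := \sum_j A i j * w j 0 * g j.
pose S2 i := \sum_j A i j * w j 0 * g j ^+ 2.
pose D := \sum_j w j 0 * g j.
have D0 : 0 <= D by apply: sumr_ge0 => j _; rewrite mulr_ge0 //; case: (g01 j).
have yE : forall i, (A *m wstep A p w) i 0 = x i + p^-1 * S1 i.
  move=> i; rewrite xE mxE /S1 mulr_sumr -big_split /=.
  by apply: eq_bigr => j _; rewrite mxE /eta -/(g j); ring.
have l1E : l1norm (wstep A p w) = l1norm w + p^-1 * D.
  rewrite /l1norm /D mulr_sumr -big_split /=; apply: eq_bigr => j _.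
  have [g0 g1] := g01 j.
  rewrite mxE -/(g j) /eta ger0_norm ?(ger0_norm (hw j)); first by ring.
  apply: mulr_ge0 => //; apply: addr_ge0 => //; rewrite mulr_ge0 // invr_ge0 ltW //.
suff H : pnorm p (A *m wstep A p w) <= pnorm p (A *m w) + p^-1 * D.
  rewrite l1E; move: H; generalize (pnorm p (A *m wstep A p w)) (pnorm p (A *m w)) (l1norm w) (p^-1 * D).
  by move=> u v L e; lra.
have S1le : forall i, 0 <= S1 i /\ S1 i <= x i.
  move=> i; rewrite xE /S1; split.
    by apply: sumr_ge0 => j _; have [? ?] := g01 j; rewrite !mulr_ge0.
  apply: ler_sum => j _; have [? ?] := g01 j.
  by rewrite -[X in _ <= X]mulr1 ler_wpM2l // mulr_ge0.
have S20 : forall i, 0 <= S2 i.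
  by move=> i; apply: sumr_ge0 => j _; have [? ?] := g01 j; rewrite !mulr_ge0 // exprn_ge0.
have CSi : forall i, S1 i ^+ 2 <= x i * S2 i.
  move=> i; rewrite xE /S1 /S2.
  have := @CS R 'I_n (fun j => A i j * w j 0) g (fun j => mulr_ge0 (hA i j) (hw j)).
  by [].
have K1 : forall i, `|(A *m wstep A p w) i 0| `^ p <= x i `^ p + x i `^ (p - 1) * (S1 i + S2 i).
  move=> i; have [h1 h2] := S1le i.
  rewrite yE ger0_norm; last by rewrite addr_ge0 // mulr_ge0 // invr_ge0 ltW.
  exact: K1s.
set N := pnorm p (A *m w).
have N0 : 0 <= N by exact: powR_ge0.
have NpE : N `^ p = \sum_i x i `^ p.
  rewrite /N /pnorm -powRrM mulVf ?gt_eqF // powRr1; last by apply: sumr_ge0 => i _; exact: powR_ge0.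
  by apply: eq_bigr => i _; rewrite ger0_norm //; exact: x0.
have sumy : \sum_i `|(A *m wstep A p w) i 0| `^ p <=
    N `^ p + \sum_i x i `^ (p - 1) * (S1 i + S2 i).
  by rewrite NpE -big_split; apply: ler_sum => i _; exact: K1.
have [Nz|Nnz] := eqVneq N 0.
  have xz : forall i, x i = 0.
    move=> i; apply: (@powR_eq0_eq0 _ _ p).
    apply: (psumr_eq0P (P := xpredT) (F := fun i => x i `^ p)) => //.
      by move=> k _; exact: powR_ge0.
    by rewrite -NpE Nz powR0 // gt_eqF.
  have : \sum_i `|(A *m wstep A p w) i 0| `^ p = 0.
    apply/eqP; rewrite eq_le; apply/andP; split; last by apply: sumr_ge0 => i _; exact: powR_ge0.
    apply: (le_trans sumy); rewrite Nz powR0 ?gt_eqF // add0r.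
    by rewrite big1 // => i _; rewrite xz powR0 ?mul0r //; apply/eqP; lra.
  rewrite /pnorm => ->; rewrite powR0 ?invr_eq0 ?gt_eqF // Nz add0r mulr_ge0 // invr_ge0 ltW //.
have Npos : 0 < N by rewrite lt_def Nnz.
have K2 : \sum_i x i `^ (p - 1) * (S1 i + S2 i) <= N `^ (p - 1) * D.
  have vE : forall i, epow (vstep A p w) (p - 1) i 0 = (N^-1 * x i) `^ (p - 1).
    by move=> i; rewrite mxE mxE.
  have xs : forall i, x i `^ (p - 1) = N `^ (p - 1) * (N^-1 * x i) `^ (p - 1).
    move=> i; rewrite -powRM ?mulVKf //; apply: mulr_ge0; [by rewrite invr_ge0|exact: x0].
  have -> : \sum_i x i `^ (p - 1) * (S1 i + S2 i) =
      N `^ (p - 1) * \sum_j w j 0 * ((g j + g j ^+ 2) * a j).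
    transitivity (\sum_i \sum_j N `^ (p - 1) * (w j 0 * ((g j + g j ^+ 2) * (A i j * (N^-1 * x i) `^ (p - 1))))).
      apply: eq_bigr => i _; rewrite xs /S1 /S2 -big_split /= mulr_sumr.
      by apply: eq_bigr => j _ /=; ring.
    rewrite exchange_big mulr_sumr; apply: eq_bigr => j _.
    rewrite /a mxE !mulr_sumr; apply: eq_bigr => i _.
    by rewrite mxE vE; ring.
  rewrite ler_wpM2l ?powR_ge0 //; apply: ler_sum => j _.
  by rewrite ler_wpM2l // ga.
have : \sum_i `|(A *m wstep A p w) i 0| `^ p <= N `^ p + N `^ (p - 1) * D.
  by apply: (le_trans sumy); rewrite lerD2l.
move=> hs.
apply: (le_trans _ (@K4 _ N D p Npos D0 hp)).
rewrite /pnorm; apply: ge0_ler_powR => //.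
- by rewrite invr_ge0 ltW.
- by rewrite nnegrE; apply: sumr_ge0 => i _; exact: powR_ge0.
- by rewrite nnegrE addr_ge0 ?powR_ge0 // mulr_ge0 ?powR_ge0.
Qed.

Lemma witer_ge0 (R : realType) (d n : nat) (A : 'M[R]_(d, n)) (eps p : R) :
  0 <= eps -> 2 <= p -> forall t j, 0 <= witer A eps p t j 0.
Proof.
move=> e0 hp; elim=> [|t IH] j /=.
  by rewrite /w0 mxE divr_ge0.
rewrite /wstep mxE; apply: mulr_ge0 => //; apply: addr_ge0 => //.
apply: mulr_ge0; first by rewrite /eta invr_ge0; apply: le_trans hp.
by rewrite mxE le_max lexx.
Qed.

Theorem lemma3 (R : realType) (d n : nat) (A : 'M[R]_(d, n)) (eps p : R)
  (hA : forall i j, 0 <= A i j)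
  (heps0 : 0 <= eps) (heps1 : eps <= 1 / 2) (hp : 2 <= p)
  (t : nat) (ht : iteration_executed A eps p t) :
  Phi A eps p t.+1 <= Phi A eps p t.
Proof.
rewrite /Phi /=.
exact: (@core R d n A p (witer A eps p t) hA hp (@witer_ge0 R d n A eps p heps0 hp t)).
Qed.
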